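(* Let $n\ge 2$ and $t\ge 0$ be integers, and let $a_1,\dots,a_t$ be integers with $1<a_1<\cdots<a_t<n$ and $\gcd(a_j,2n)=1$ for $1\le j\le t$. Then $\chi_{la}(C_{2n}(1,a_1,\dots,a_t))=3$.
   Context: For an integer $m\ge 3$ and integers $s_1,\dots,s_k$, the circulant graph $C_m(s_1,\dots,s_k)$ is the simple graph with vertex set $\mathbb Z_m$ in which distinct vertices $u,v$ are adjacent if and only if $u-v\equiv \pm s_i\pmod m$ for some $i$. For a connected graph $G=(V,E)$ with $q=|E|$, a local antimagic labeling is a bijection $f:E\to\{1,\dots,q\}$ such that adjacent vertices $x,y$ satisfy $f^+(x)\ne f^+(y)$, where $f^+(x)=\sum f(e)$ over edges $e$ incident to $x$; $\chi_{la}(G)$ is the minimum number of distinct values of $f^+$ over all local antimagic labelings $f$ of $G$. *)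

(* Defs.v *)
From mathcomp Require Import all_boot.
Set Implicit Arguments. Unset Strict Implicit. Unset Printing Implicit Defensive.

Definition circ_adj (m : nat) (S : seq nat) : rel 'I_m :=
  fun u v => (u != v) &&
    has (fun s => ((u : nat) == (v + s) %% m) || ((v : nat) == (u + s) %% m)) S.

Section LA.
Variables (T : finType) (adj : rel T).

Definition edges : {set {set T}} :=
  [set e : {set T} | [exists x, exists y, adj x y && (e == [set x; y])]].

Definition vsum (f : {set T} -> nat) (x : T) : nat :=
  \sum_(e in edges | x \in e) f e.

Definition edge_bij (f : {set T} -> nat) : Prop :=
  {in edges &, injective f} /\
  (forall k, 1 <= k <= #|edges| -> exists2 e, e \in edges & f e = k) /\
  (forall e, e \in edges -> 1 <= f e <= #|edges|).

Definition local_antimagic (f : {set T} -> nat) : Prop :=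
  edge_bij f /\ (forall x y, adj x y -> vsum f x != vsum f y).

Definition n_colors (f : {set T} -> nat) : nat :=
  size (undup [seq vsum f x | x <- enum T]).

Definition chi_la_eq (k : nat) : Prop :=
  (exists f, local_antimagic f /\ n_colors f = k) /\
  (forall f, local_antimagic f -> k <= n_colors f).
End LA.

(* Main.v *)
Require Import Defs.
From mathcomp Require Import all_boot.
From mathcomp Require Import cyclic zify.
Set Implicit Arguments. Unset Strict Implicit. Unset Printing Implicit Defensive.

Lemma sum_par m (b : bool) :
  \sum_(0 <= i < 2 * m) (if odd i == b then 1 else 0) = m.
Proof.
elim: m => [|m IH]; first by rewrite big_geq.
rewrite mulnS addSn add1n !big_nat_recr //= IH oddM /=; clear IH; case: b => /=; lia.
Qed.

Section Main.
Variables (n : nat) (a : seq nat).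
Hypothesis Hn : 2 <= n.
Hypothesis Hsort : sorted ltn a.
Hypothesis Hrange : all (fun x => (1 < x) && (x < n)) a.
Hypothesis Hcop : all (fun x => coprime x (2 * n)) a.

Local Notation N := (2 * n).
Local Notation T := 'I_(2 * n).
Local Notation S := (1 :: a).
Definition L := size (1 :: a).
Arguments L : simpl never.
Local Notation adj := (@circ_adj (2 * n) (1 :: a)).

Lemma S_uniq : uniq S.
Proof.
apply: (sorted_uniq ltn_trans ltnn) => /=.
rewrite (path_sortedE ltn_trans) Hsort andbT.
by apply/allP => x /(allP Hrange) /andP[].
Qed.

Lemma S_mem s : s \in S -> [/\ 0 < s, s < n, odd s & coprime s n].
Proof.
rewrite inE => /orP[/eqP -> | Hs].
  by split; rewrite ?coprime1n //; lia.
move/(allP Hrange): (Hs) => /andP[H1 H2].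
move/(allP Hcop): Hs; rewrite coprimeMr => /andP[H3 H4].
split => //; first lia.
by rewrite coprimen2 in H3.
Qed.

Lemma L_lt : L < n.
Proof.
have H := @uniq_leq_size _ S (iota 1 n.-1) S_uniq.
have: size S <= size (iota 1 n.-1).
  apply: H => x /S_mem [H1 H2 _ _]; rewrite mem_iota; lia.
rewrite /L size_iota; lia.
Qed.

Lemma NP : 0 < N. Proof. lia. Qed.

Definition addv (v : T) (s : nat) : T := Ordinal (ltn_pmod (v + s) NP).
Definition subv (v : T) (s : nat) : T := Ordinal (ltn_pmod (v + (N - s)) NP).

Lemma addvK v s : s <= N -> subv (addv v s) s = v.
Proof.
move=> hs; apply: val_inj => /=.
rewrite modnDml -addnA subnKC // modnDr modn_small //.
Qed.

Lemma subvK v s : s <= N -> addv (subv v s) s = v.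
Proof.
move=> hs; apply: val_inj => /=.
rewrite modnDml -addnA addnC subnK // modnDl modn_small //.
Qed.

Lemma addv_neq v s : 0 < s < N -> addv v s != v.
Proof.
move=> hs; apply/eqP => /(congr1 val) /= /eqP.
rewrite -{2}(modn_small (ltn_ord v)) -{2}[val v]addn0 eqn_modDl mod0n modn_small; lia.
Qed.

Lemma subv_neq v s : 0 < s < N -> subv v s != v.
Proof.
move=> hs; apply/eqP => E.
have := addv_neq v hs; rewrite -{1}E subvK ?eqxx //; lia.
Qed.

Lemma oddN : odd N = false. Proof. by rewrite oddM. Qed.

Lemma odd_addv v s : odd (addv v s) = odd v (+) odd s.
Proof. by rewrite /= odd_mod ?oddN ?oddD. Qed.

Lemma odd_subv v s : s <= N -> odd (subv v s) = odd v (+) odd s.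
Proof. by move=> hs; rewrite /= odd_mod ?oddN // oddD oddB // oddN. Qed.

Lemma adj_parity x y : adj x y -> odd x != odd y.
Proof.
move/andP=> [_ /hasP [s Hs /orP[/eqP E|/eqP E]]]; have [_ _ os _] := S_mem Hs;
  rewrite E odd_mod ?oddN // oddD os addbT; by case: odd.
Qed.

Lemma adj_succ (x y : T) : val y = (val x).+1 -> adj x y.
Proof.
move=> H; apply/andP; split.
  by apply/eqP => E; rewrite E in H; lia.
rewrite /=; apply/orP; left; apply/orP; right.
by rewrite addn1 -H modn_small ?ltn_ord. 
Qed.

Lemma card_par (b : bool) : #|[pred x : T | odd x == b]| = n.
Proof.
rewrite -sum1_card big_mkcond /=.
by rewrite -(big_mkord xpredT (fun i => if odd i == b then 1 else 0)) sum_par.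
Qed.

Lemma dc f (P : pred T) :
  (forall e, e \in edges adj -> #|[pred x in e | P x]| = 1) ->
  \sum_(x | P x) vsum adj f x = \sum_(e in edges adj) f e.
Proof.
move=> H; rewrite /vsum.
under eq_bigr do rewrite big_mkcondr.
rewrite exchange_big /=; apply: eq_bigr => e He.
rewrite -big_mkcondr (eq_bigl [pred x in e | P x]) ?sum_nat_const ?H ?mul1n //.
by move=> x; rewrite !inE andbC.
Qed.

Lemma edge_card e (b : bool) : e \in edges adj -> #|[pred x in e | odd x == b]| = 1.
Proof.
rewrite /edges inE => /existsP[x /existsP[y /andP[Hxy /eqP ->]]].
have Hp := adj_parity Hxy.
have xy : x != y by case/andP: Hxy.
rewrite -[RHS](card1 (if odd x == b then x else y)); apply: eq_card => z; rewrite !inE.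
have yx : (y == x) = false by apply/negbTE; rewrite eq_sym.
have xy' : (x == y) = false by apply/negbTE.
case: (eqVneq z x) => [->|zx] /=.
  case: ifP => hb; rewrite ?eqxx ?xy' ?hb //.
case: (eqVneq z y) => [->|zy] /=.
  case: ifP => hb; rewrite ?eqxx ?yx;
    by move: hb Hp; case: (odd x); case: (odd y); case: b.
by case: ifP => _; apply/esym/negbTE.
Qed.

Lemma lower f : local_antimagic adj f -> 3 <= n_colors adj f.
Proof.
move=> [_ Hla]; rewrite leqNgt; apply/negP; rewrite /n_colors => Hlt.
set vs := vsum adj f in Hla Hlt *.
pose x0 : T := Ordinal NP.
have h1 : 1 < N by lia.
pose x1 : T := Ordinal h1.
have n01 : vs x0 != vs x1 by apply: Hla; apply: adj_succ.
have Hmem x : vs x \in undup [seq vs x | x <- enum T].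
  by rewrite mem_undup; apply: map_f; rewrite mem_enum.
have Hall x : (vs x == vs x0) || (vs x == vs x1).
  apply/negPn/negP => /norP[h0 h1'].
  have: size [:: vs x; vs x0; vs x1] <= size (undup [seq vs x | x <- enum T]).
    apply: uniq_leq_size.
      by rewrite /= !inE negb_or h0 h1' n01.
    by move=> z; rewrite !inE => /or3P[]/eqP->; apply: Hmem.
  by move: Hlt => /= H1 H2; lia.
have Hpar i (Hi : i < N) : vs (Ordinal Hi) = if odd i then vs x1 else vs x0.
  elim: i Hi => [|i IH] Hi.
    by rewrite /=; congr (vs _); apply: val_inj.
  have Hi' : i < N by lia.
  have Ha : vs (Ordinal Hi') != vs (Ordinal Hi) by apply: Hla; apply: adj_succ.
  rewrite (IH Hi') in Ha; rewrite /=.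
  by case: (odd i) Ha; case/orP: (Hall (Ordinal Hi)) => /eqP ->; rewrite ?eqxx.
have E0 := @dc f (fun x => odd x == false) (fun e He => edge_card false He).
have E1 := @dc f (fun x => odd x == true) (fun e He => edge_card true He).
rewrite -E1 in E0.
have S0 : \sum_(x : T | odd x == false) vsum adj f x = n * vs x0.
  rewrite (eq_bigr (fun _ => vs x0)); last first.
    by move=> [i Hi] /= /eqP Ho; have := Hpar i Hi; rewrite Ho.
  by rewrite sum_nat_const card_par.
have S1 : \sum_(x : T | odd x == true) vsum adj f x = n * vs x1.
  rewrite (eq_bigr (fun _ => vs x1)); last first.
    by move=> [i Hi] /= /eqP Ho; have := Hpar i Hi; rewrite Ho.
  by rewrite sum_nat_const card_par.
rewrite S0 S1 in E0.
move/eqP: E0; rewrite eqn_pmul2l; last lia.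
by rewrite (negbTE n01).
Qed.


Definition s (j : nat) := nth 0 S j.

Lemma s_mem j : j < L -> [/\ 0 < s j, s j < n, odd (s j) & coprime (s j) n].
Proof. by move=> hj; apply: S_mem; apply: mem_nth. Qed.

Lemma sN j : j < L -> 0 < s j < N.
Proof. by move=> /s_mem [h1 h2 _ _]; lia. Qed.

Lemma s_inj i j : i < L -> j < L -> s i = s j -> i = j.
Proof. by move=> hi hj E; apply/eqP; rewrite -(nth_uniq 0 hi hj S_uniq) -/(s i) -/(s j) E. Qed.

Definition w j := s j ^ (totient n).-1.

Lemma sw j : j < L -> (s j * w j) %% n = 1.
Proof.
move=> hj; have [h1 h2 _ hc] := s_mem hj.
rewrite /w -expnS prednK ?totient_gt0; last lia.
by rewrite Euler_exp_totient // modn_small.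
Qed.

Definition r j p := (p * w j) %% n.

Lemma r_lt j p : r j p < n.
Proof. by rewrite /r ltn_pmod //; lia. Qed.

Lemma r_inj j p q : j < L -> p < n -> q < n -> r j p = r j q -> p = q.
Proof.
move=> hj hp hq E.
have ws : (w j * s j) %% n = 1 by rewrite mulnC sw.
have key m : m < n -> (r j m * s j) %% n = m.
  by move=> hm; rewrite /r modnMml -mulnA -modnMmr ws muln1 modn_small.
by rewrite -(key p hp) -(key q hq) E.
Qed.

Lemma r_step j p : j < L -> r j ((p + s j) %% n) = (r j p).+1 %% n.
Proof.
move=> hj; rewrite /r modnMml mulnDl -modnDm sw // addn1.
by [].
Qed.

Lemma r_zero j p : j < L -> p < n -> (r j p == 0) = (p == 0).
Proof.
move=> hj hp; apply/eqP/eqP => [h|->]; last by rewrite /r mul0n mod0n.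
apply: (r_inj hj hp) => //; first lia.
by rewrite h /r mul0n mod0n.
Qed.

Definition lab (j : nat) (v : T) : nat :=
  if odd v then (2 * j + 2) * n - r j (((v + s j) %% N)./2)
  else 2 * j * n + 1 + r j (v./2).

Definition key (j : nat) (v : T) : nat :=
  if odd v then n.-1 - r j (((v + s j) %% N)./2) else r j (v./2).

Lemma key_lt j v : key j v < n.
Proof. rewrite /key; case: odd; have := r_lt j; [move=> h; lia | by []]. Qed.

Lemma lab_dec j v : lab j v = (2 * j + odd v) * n + key j v + 1.
Proof.
rewrite /lab /key; case: odd => /=.
  by have := r_lt j (((v + s j) %% N)./2); lia.
by lia.
Qed.

Definition label (d : 'I_L * T) := lab d.1 d.2.
Definition D (d : 'I_L * T) : {set T} := [set d.2; addv d.2 (s d.1)].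
Definition f (e : {set T}) : nat :=
  if [pick d | D d == e] is Some d then label d else 0.

Lemma modK1 (v k : nat) : v < N -> (v + k) %% N = v -> k %% N = 0.
Proof.
move=> hv h; apply/eqP; rewrite -[X in _ == X](mod0n N) -(eqn_modDl v) addn0 h modn_small //.
Qed.

Lemma modK2 (v k1 k2 : nat) : (v + k1) %% N = (v + k2) %% N -> k1 %% N = k2 %% N.
Proof. by move=> h; apply/eqP; rewrite -(eqn_modDl v) h. Qed.

Lemma D_inj : injective D.
Proof.
move=> [j1 v1] [j2 v2] /= E.
have hs1 := sN (ltn_ord j1); have hs2 := sN (ltn_ord j2).
have hs1' := s_mem (ltn_ord j1); have hs2' := s_mem (ltn_ord j2).
have v1in : v1 \in D (j2, v2) by rewrite -E !inE eqxx.
have w1in : addv v1 (s j1) \in D (j2, v2) by rewrite -E !inE eqxx orbT.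
have v2in : v2 \in D (j1, v1) by rewrite E !inE eqxx.
rewrite !inE /= in v1in w1in v2in.
case/orP: v1in => /eqP e1.
  subst v2; rewrite (negbTE (addv_neq _ hs1)) /= in w1in.
  move/eqP/(congr1 val): w1in => /= /modK2.
  case/andP: hs1 => _ hs1; case/andP: hs2 => _ hs2; rewrite !modn_small //.
  move=> /(s_inj (ltn_ord j1) (ltn_ord j2)) hj.
  by congr pair; apply: val_inj.
have : v2 != v1 by rewrite e1 eq_sym addv_neq.
move/negbTE=> ne; rewrite ne /= in v2in.
move/eqP/(congr1 val): v2in; rewrite /= e1 /= modnDml -addnA => /esym /(modK1 (ltn_ord v2)).
case: hs1' => h1 h2 _ _; case: hs2' => h3 h4 _ _.
rewrite modn_small; [move=> h; exfalso; lia | lia].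
Qed.

Lemma edgesE : edges adj = [set D d | d in setT].
Proof.
apply/setP => e; rewrite /edges inE; apply/existsP/imsetP.
  move=> [x /existsP[y /andP[Hxy /eqP ->]]].
  move: Hxy => /andP[_ /hasP[s0 Hs /orP[/eqP E|/eqP E]]].
    have hj : index s0 S < L by rewrite /L index_mem.
    have sj : s (Ordinal hj) = s0 by rewrite /s nth_index.
    exists (Ordinal hj, y); first by rewrite inE.
    rewrite /D /= (_ : addv y (s (Ordinal hj)) = x) 1?setUC //.
    by apply: val_inj; rewrite /= sj E.
  have hj : index s0 S < L by rewrite /L index_mem.
  have sj : s (Ordinal hj) = s0 by rewrite /s nth_index.
  exists (Ordinal hj, x); first by rewrite inE.
  rewrite /D /= (_ : addv x (s (Ordinal hj)) = y) //.
  by apply: val_inj; rewrite /= sj E.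
move=> [[j v] _ ->]; exists v; apply/existsP; exists (addv v (s j)).
rewrite eqxx andbT; apply/andP; split.
  by rewrite eq_sym; apply: addv_neq; apply: sN.
apply/hasP; exists (s j); first by apply: mem_nth.
by apply/orP; right.
Qed.

Lemma card_edges : #|edges adj| = L * N.
Proof.
by rewrite edgesE card_imset; [rewrite cardsT card_prod !card_ord | exact: D_inj].
Qed.

Lemma fD d : f (D d) = label d.
Proof.
rewrite /f; case: pickP => [d' /eqP /D_inj -> // | /(_ d)]; by rewrite eqxx.
Qed.

Lemma half_eq (x y : nat) : odd x = odd y -> x./2 = y./2 -> x = y.
Proof. by move=> h1 h2; rewrite -(odd_double_half x) -(odd_double_half y) h1 h2. Qed.

Lemma half_lt (m : nat) : m < N -> m./2 < n.
Proof. by rewrite ltn_half_double -mul2n. Qed.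

Lemma label_inj : injective label.
Proof.
move=> [j1 v1] [j2 v2]; rewrite /label /= !lab_dec => E.
have k1 := key_lt j1 v1; have k2 := key_lt j2 v2.
have E' : (2 * j1 + odd v1) * n + key j1 v1 = (2 * j2 + odd v2) * n + key j2 v2 by lia.
have Q : 2 * j1 + odd v1 = 2 * j2 + odd v2.
  have := congr1 (fun m => m %/ n) E'; rewrite /= !divnMDl ?divn_small //; try lia.
have K : key j1 v1 = key j2 v2.
  have := congr1 (fun m => m %% n) E'; rewrite /= !modnMDl !modn_small //.
have hj : j1 = j2 :> nat by move: Q; case: (odd v1); case: (odd v2) => /=; lia.
have ho : odd v1 = odd v2 by move: Q; rewrite hj; case: (odd v1); case: (odd v2) => /=; lia.
have jj : j1 = j2 by apply: val_inj.
subst j2; congr pair.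
move: K; rewrite /key -ho; case: ifP => hv.
  have r1 := r_lt j1 (((v1 + s j1) %% N)./2); have r2 := r_lt j1 (((v2 + s j1) %% N)./2).
  move=> K; have K' : r j1 (((v1 + s j1) %% N)./2) = r j1 (((v2 + s j1) %% N)./2) by lia.
  move/r_inj: K' => /(_ (ltn_ord j1)) K'.
  have {}K' := K' (half_lt (ltn_pmod _ NP)) (half_lt (ltn_pmod _ NP)).
  have os := s_mem (ltn_ord j1); case: os => _ _ os _.
  have := half_eq _ K'; rewrite !odd_mod ?oddN // !oddD hv -ho hv => /(_ erefl) K2.
  have : addv v1 (s j1) = addv v2 (s j1) by apply: val_inj.
  by move/(congr1 (fun z => subv z (s j1))); rewrite !addvK //; case/andP: (sN (ltn_ord j1)) => _ /ltnW.
move/r_inj => /(_ (ltn_ord j1) (half_lt (ltn_ord v1)) (half_lt (ltn_ord v2))) K'.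
by apply: val_inj; apply: half_eq; rewrite // -ho.
Qed.

Lemma label_range d : 1 <= label d <= L * N.
Proof.
case: d => j v; rewrite /label /= lab_dec.
have := key_lt j v; have := ltn_ord j.
case: (odd v) => /=; nia.
Qed.

Lemma f_bij : edge_bij adj f.
Proof.
split.
  move=> e1 e2; rewrite edgesE => /imsetP[d1 _ ->] /imsetP[d2 _ ->].
  by rewrite !fD => /label_inj ->.
split.
  move=> k hk; rewrite card_edges in hk.
  have U : uniq (map label (enum {: 'I_L * T})).
    by rewrite map_inj_uniq ?enum_uniq //; exact: label_inj.
  have sub : {subset map label (enum {: 'I_L * T}) <= iota 1 (L * N)}.
    move=> m /mapP[d _ ->]; rewrite mem_iota; have := label_range d; lia.
  have sz : size (iota 1 (L * N)) <= size (map label (enum {: 'I_L * T})).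
    by rewrite size_iota size_map -cardE card_prod !card_ord.
  have [_ eqs] := uniq_min_size U sub sz.
  have : k \in iota 1 (L * N) by rewrite mem_iota; lia.
  rewrite -eqs => /mapP[d _ ->].
  exists (D d); last exact: fD.
  by rewrite edgesE; apply: imset_f; rewrite inE.
move=> e; rewrite edgesE => /imsetP[d _ ->]; rewrite fD -edgesE card_edges.
exact: label_range.
Qed.

Lemma layer (x : T) (j : 'I_L) :
  \sum_(v : T) (if x \in D (j, v) then label (j, v) else 0) = lab j x + lab j (subv x (s j)).
Proof.
have hs := sN (ltn_ord j).
have hsN : s j <= N by case/andP: hs => _ /ltnW.
rewrite (bigD1 x) //= (bigD1 (subv x (s j))) /=; last by rewrite subv_neq.
rewrite !inE eqxx /= subvK // eqxx orbT /label /= big1 ?addn0 // => v /andP[vx vy].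
rewrite !inE eq_sym (negbTE vx) /=.
case: eqP => // E; move: vy; by rewrite E addvK // eqxx.
Qed.

Lemma vsumE (x : T) : vsum adj f x = \sum_(j < L) (lab j x + lab j (subv x (s j))).
Proof.
rewrite /vsum edgesE big_mkcondr big_imset /=; last by move=> d1 d2 _ _; exact: D_inj.
rewrite (eq_bigl xpredT); last by move=> d; rewrite inE.
rewrite [RHS](eq_bigr (fun j => \sum_(v : T) (if x \in D (j, v) then label (j, v) else 0))); last first.
  by move=> j _; rewrite layer.
by rewrite pair_bigA; apply: eq_bigr => [[j v]] _; rewrite fD.
Qed.

Lemma lay_even (x : T) (j : 'I_L) : ~~ odd x -> lab j x + lab j (subv x (s j)) = (4 * j + 2) * n + 1.
Proof.
move=> hx; have hs := sN (ltn_ord j).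
have hsN : s j <= N by case/andP: hs => _ /ltnW.
have [_ _ os _] := s_mem (ltn_ord j).
have e : (subv x (s j) + s j) %% N = x by rewrite -[RHS](congr1 val (subvK x hsN)).
rewrite /lab odd_subv // (negbTE hx) os /= e.
by have := r_lt j (x./2); lia.
Qed.

Lemma lay_odd (x : T) (j : 'I_L) : odd x ->
  lab j x + lab j (subv x (s j)) = (4 * j + 2) * n + n * ((x + s j) %% N == 0).
Proof.
move=> hx; have hs := sN (ltn_ord j).
have hsN : s j <= N by case/andP: hs => _ /ltnW.
have [_ _ os _] := s_mem (ltn_ord j).
set y := subv x (s j).
have ey : odd y = false by rewrite odd_subv // hx os.
have hxy : (x : nat) = (y + s j) %% N by rewrite -[LHS](congr1 val (subvK x hsN)).
set p := y./2.
have y2 : (y : nat) = 2 * p by rewrite -(odd_double_half y) ey add0n -mul2n.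
set q := (p + s j) %% n.
have xs : (x + s j) %% N = 2 * q.
  by rewrite hxy modnDml -addnA y2 addnn -mul2n -mulnDr muln_modr.
have hq : ((x + s j) %% N)./2 = q by rewrite xs mul2n doubleK.
have rq := r_step p (ltn_ord j); rewrite -/q in rq.
have hq0 : ((x + s j) %% N == 0) = ((r j p).+1 %% n == 0).
  rewrite xs -rq r_zero ?ltn_pmod //; last lia.
  by rewrite muln_eq0.
rewrite /lab hx ey hq -/p rq hq0.
move: (r j p) (r_lt j p) => R hR; clear -hR.
case: (ltnP R.+1 n) => h1.
  rewrite modn_small //=; lia.
have -> : R.+1 = n by lia.
rewrite modnn /=; lia.
Qed.

Definition A := \sum_(j < L) (4 * j + 2) * n.

Lemma vsum_even (x : T) : ~~ odd x -> vsum adj f x = A + L.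
Proof.
move=> hx; rewrite vsumE (eq_bigr (fun j : 'I_L => (4 * j + 2) * n + 1)); last first.
  by move=> j _; rewrite lay_even.
by rewrite big_split /= big_const_ord iter_addn_0 mul1n.
Qed.

Lemma sum_le1 (x : T) : \sum_(j < L) ((x + s j) %% N == 0) <= 1.
Proof.
case: (pickP (fun j : 'I_L => (x + s j) %% N == 0)) => [j0 hj0 | none]; last first.
  by rewrite big1 // => j _; rewrite none.
rewrite (bigD1 j0) //= hj0 big1 // => j hj.
case: eqP => // E; move/eqP: hj0 => E0.
have := modK2 (etrans E (esym E0)).
have := sN (ltn_ord j); have := sN (ltn_ord j0) => /andP[_ h0] /andP[_ h].
rewrite !modn_small // => /(s_inj (ltn_ord j) (ltn_ord j0)) /val_inj hjj.
by rewrite hjj eqxx in hj.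
Qed.

Lemma vsum_odd (x : T) : odd x -> (vsum adj f x == A) || (vsum adj f x == A + n).
Proof.
move=> hx; rewrite vsumE (eq_bigr (fun j : 'I_L => (4 * j + 2) * n + n * ((x + s j) %% N == 0))); last first.
  by move=> j _; rewrite lay_odd.
rewrite big_split /= -big_distrr /= -/A.
have := sum_le1 x; case: (\sum_(j < L) _) => [|[|k]] //= _.
  by rewrite muln0 addn0 eqxx.
by rewrite muln1 eqxx orbT.
Qed.

Lemma L_pos : 0 < L. Proof. by rewrite /L. Qed.

Lemma f_la : local_antimagic adj f.
Proof.
split; first exact: f_bij.
have hL := L_lt; have hL0 := L_pos.
have key (x y : T) : odd x -> ~~ odd y -> vsum adj f x != vsum adj f y.
  move=> hx hy; rewrite (vsum_even hy).
  by case/orP: (vsum_odd hx) => /eqP ->; apply/eqP; lia.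
move=> x y /adj_parity hxy.
case hx: (odd x) hxy => hxy.
  by apply: key; rewrite // eq_sym in hxy; move: hxy; case: (odd y).
rewrite eq_sym; apply: key; last by rewrite hx.
by move: hxy; case: (odd y).
Qed.

Lemma f_le3 : n_colors adj f <= 3.
Proof.
rewrite /n_colors.
have -> : 3 = size [:: A + L; A; A + n] by [].
apply: uniq_leq_size; first exact: undup_uniq.
move=> z; rewrite mem_undup => /mapP[x _ ->]; rewrite !inE.
case hx: (odd x).
  by case/orP: (vsum_odd hx) => ->; rewrite ?orbT.
by rewrite vsum_even ?hx // eqxx.
Qed.

Lemma main_sec : @chi_la_eq 'I_(2 * n) (@circ_adj (2 * n) (1 :: a)) 3.
Proof.
split; last exact: lower.
exists f; split; first exact: f_la.
by apply/eqP; rewrite eqn_leq f_le3 lower //; exact: f_la.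
Qed.

End Main.

Theorem mainTheorem6 (n : nat) (a : seq nat) :
  2 <= n ->
  sorted ltn a ->
  all (fun x => (1 < x) && (x < n)) a ->
  all (fun x => coprime x (2 * n)) a ->
  @chi_la_eq 'I_(2 * n) (@circ_adj (2 * n) (1 :: a)) 3.
Proof. by move=> *; apply: main_sec. Qed.
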